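(* Let $K$ be an algebraically closed field, complete with respect to a non-trivial non-archimedean absolute value $|\cdot|=|\cdot|_v$, with $\mathrm{char}(K)=0$ or $\mathrm{char}(K)>d$. Let $f\in\mathrm{Poly}_{N,d}(K)$ and $D\in\mathrm{Div}^*(\mathbb{P}^N)$ over $K$. Then (1) $\lambda_v(f_*(D))\le d\max\{\mathcal{B}_v(f),\lambda_v(D)\}$; (2) if $\lambda_v(D)>\mathcal{B}_v(f)$, then $\lambda_v(f_*(D))=d\lambda_v(D)$.
   Context: $N\ge1$, $d\ge2$. $\mathrm{Ind}^*(N,d)$ is the set of multi-indices $I=(I_0,\dots,I_N)$ with $\sum I_j=d$, $0<I_N<d$, and $\mathbf{x}^I=\prod x_j^{I_j}$. $\mathrm{Poly}_{N,d}(K)$ is the set of tuples $(a_{i,I})_{0\le i<N,I\in\mathrm{Ind}^*(N,d)}$ in $K$, each giving $f=[f_0:\cdots:f_N]$, $f_i=x_i^d+\sum_Ia_{i,I}\mathbf{x}^I$ ($i<N$), $f_N=x_N^d$; $\mathcal{B}_v(f)=\log^+\max|a_{i,I}|^{1/I_N}$. $\mathrm{Div}^*(\mathbb{P}^N)$ is the set of effective divisors defined by a form $F_D$ with $F_D(x_0,\dots,x_{N-1},0)=\prod_{i<N}x_i^{e_i}$ ($e_i\ge0$); for such $D$, $\lambda_v(D)=\log^+\sup_{|\beta_0|=\cdots=|\beta_{N-1}|=1}\max\{|\beta_N|^{-1}:F_D(\beta_0,\dots,\beta_N)=0\}$. $f_*(D)$ is the push-forward divisor, defined by the form $\mathrm{Res}(F_D,f)$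 with $\mathrm{Res}(F,f)(y_0,\dots,y_{N-1},1)=\mathrm{Res}_{x_0,\dots,x_N}(F,y_0x_N^d-f_0,\dots,y_{N-1}x_N^d-f_{N-1})$ (Macaulay resultant); its $K$-points are exactly the images under $f$ of the $K$-points of $D$, and $f_*(D)\in\mathrm{Div}^*$. *)

(* Defs.v *)
From HB Require Import structures.
From mathcomp Require Import all_boot all_order all_algebra.
From mathcomp Require Import all_classical all_reals all_analysis.
From mathcomp Require mpoly.
Set Implicit Arguments. Unset Strict Implicit. Unset Printing Implicit Defensive.
Import Order.TTheory GRing.Theory Num.Theory.
Local Open Scope ring_scope.
Local Open Scope classical_set_scope.

Definition nonarch_complete_abs (K : fieldType) (R : realType) (v : K -> R) : Prop :=
  (forall x, 0 <= v x) /\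
  (forall x, v x = 0 <-> x = 0) /\
  (forall x y, v (x * y) = v x * v y) /\
  (forall x y, v (x + y) <= Num.max (v x) (v y)) /\
  (exists x, v x != 0 /\ v x != 1) /\
      (forall u : nat -> K,
         (forall e : R, 0 < e -> exists n0, forall m n, (n0 <= m)%N -> (n0 <= n)%N ->
              v (u m - u n) < e) ->
         exists l, forall e : R, 0 < e -> exists n0, forall n, (n0 <= n)%N ->
              v (u n - l) < e).

Definition midx (N d : nat) := {ffun 'I_N.+1 -> 'I_d.+1}.

Definition ind_star (N d : nat) (I : midx N d) : bool :=
  [&& (\sum_(j < N.+1) (I j : nat) == d)%N, (0 < I ord_max)%N & (I ord_max < d)%N].

Definition xpow (K : nzRingType) (N d : nat) (x : 'I_N.+1 -> K) (I : midx N d) : K :=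
  \prod_(j < N.+1) x j ^+ I j.

(* An element of Poly_{N,d}(K) is a tuple (a_{i,I})_{i<N, I in Ind^*(N,d)};
   we represent it by a : 'I_N -> midx N d -> K, only the values at
   I \in Ind^*(N,d) being relevant. *)
Definition polyND (K : nzRingType) (N d : nat) := 'I_N -> midx N d -> K.

Definition fcomp (K : nzRingType) (N d : nat) (a : polyND K N d)
    (x : 'I_N.+1 -> K) (i : 'I_N.+1) : K :=
  match unlift ord_max i with
  | Some i' => x i ^+ d + \sum_(I : midx N d | ind_star I) a i' I * xpow x I
  | None => x ord_max ^+ d
  end.

Definition logp (R : realType) (x : R) : R := ln (Num.max 1 x).

Definition Bv (K : nzRingType) (R : realType) (v : K -> R) (N d : nat)
    (a : polyND K N d) : R :=
  logp (\big[Num.max/0]_(i < N) \big[Num.max/0]_(I : midx N d | ind_star I)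
          (v (a i I) `^ ((I ord_max)%:R)^-1)).

(* the form F_D defining D: a nonzero homogeneous polynomial in x_0..x_N with
   F_D(x_0,...,x_{N-1},0) = prod_{i<N} x_i^{e_i}. *)
Definition div_star (K : nzRingType) (N : nat) (F : mpoly.mpoly N.+1 K) : Prop :=
  (exists deg : nat, all (fun m => mpoly.mdeg m == deg) (mpoly.msupp F)) /\
  exists e : 'I_N -> nat, forall x : 'I_N.+1 -> K, x ord_max = 0 ->
    mpoly.meval x F = \prod_(i < N) x (widen_ord (leqnSn N) i) ^+ e i.

Definition elogp (R : realType) (x : \bar R) : \bar R :=
  match x with
  | r%:E => (logp r)%:E
  | +oo%E => +oo%E
  | -oo%E => 0%E
  end.

(* lambda_v of a divisor, as a function of its set S of K-points (affine cone
   in K^{N+1}):  log^+ sup { |beta_N|^{-1} : beta in S, |beta_i| = 1 (i<N) } *)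
Definition lambda_set (K : nzRingType) (R : realType) (v : K -> R) (N : nat)
    (S : set ('I_N.+1 -> K)) : \bar R :=
  elogp (ereal_sup [set ((v (b ord_max))^-1)%:E | b in
           [set b | S b /\ forall i : 'I_N, v (b (widen_ord (leqnSn N) i)) = 1]]).

Definition zeroes (K : nzRingType) (N : nat) (F : mpoly.mpoly N.+1 K) :
    set ('I_N.+1 -> K) := [set b | mpoly.meval b F = 0].

Definition lambda_div (K : nzRingType) (R : realType) (v : K -> R) (N : nat)
    (F : mpoly.mpoly N.+1 K) : \bar R := lambda_set v (zeroes F).

(* K-points (affine cone) of the push-forward f_*(D): the images under f of
   the K-points of D (lines through them). *)
Definition push_zeroes (K : nzRingType) (N d : nat) (a : polyND K N d)
    (F : mpoly.mpoly N.+1 K) : set ('I_N.+1 -> K) :=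
  [set y | exists (c : K) (x : 'I_N.+1 -> K),
      zeroes F x /\ y = (fun i => c * fcomp a x i)].

Definition lambda_push (K : nzRingType) (R : realType) (v : K -> R) (N d : nat)
    (a : polyND K N d) (F : mpoly.mpoly N.+1 K) : \bar R :=
  lambda_set v (push_zeroes a F).

(* Main.v *)
Require Import Defs.
From HB Require Import structures.
From mathcomp Require Import all_boot all_order all_algebra.
From mathcomp Require Import all_classical all_reals all_analysis.
From mathcomp Require mpoly.
Import Order.TTheory GRing.Theory Num.Theory.
Local Open Scope ring_scope.

Section Val.
Context {K : fieldType} {R : realType} {v : K -> R}.
Hypothesis Hv : nonarch_complete_abs v.

Lemma v_ge0 x : 0 <= v x. Proof. by case: Hv. Qed.
Lemma v_eq0 x : v x = 0 <-> x = 0. Proof. by case: Hv => _ []. Qed.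
Lemma vM x y : v (x * y) = v x * v y. Proof. by case: Hv => _ [] _ []. Qed.
Lemma vD x y : v (x + y) <= Num.max (v x) (v y).
Proof. by case: Hv => _ [] _ [] _ []. Qed.
Lemma v0 : v 0 = 0. Proof. by apply/v_eq0. Qed.
Lemma v1 : v 1 = 1.
Proof.
have h := vM 1 1; rewrite mulr1 in h.
have n0 : v 1 != 0 by apply/eqP => /v_eq0/eqP; rewrite oner_eq0.
by apply: (mulfI n0); rewrite -h mulr1.
Qed.
Lemma vX x n : v (x ^+ n) = v x ^+ n.
Proof. by elim: n => [|n IH]; rewrite ?expr0 ?v1 // !exprS vM IH. Qed.
Lemma vN x : v (- x) = v x.
Proof.
have h : v (-1) = 1.
  have e : v (-1) ^+ 2 = 1 by rewrite -vX sqrrN expr1n v1.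
  move/eqP: e; rewrite sqrf_eq1 => /orP[/eqP //|/eqP e].
  by have := v_ge0 (-1); rewrite e ler0N1.
by rewrite -mulN1r vM h mul1r.
Qed.
Lemma vV x : v (x ^-1) = (v x)^-1.
Proof.
have [->|nx] := eqVneq x 0; first by rewrite invr0 v0 invr0.
have h := vM x x^-1; rewrite mulfV // v1 in h.
have vx0 : v x != 0 by apply/eqP => /v_eq0/eqP; rewrite (negbTE nx).
by rewrite -[LHS]mul1r -(mulVf vx0) -mulrA -h mulr1.
Qed.
Lemma v_strict x y : v y < v x -> v (x + y) = v x.
Proof.
move=> lt; apply/eqP; rewrite eq_le; apply/andP; split.
  by apply: le_trans (vD _ _) _; rewrite ge_max lexx ltW.
have := vD (x + y) (- y); rewrite addrK vN.
rewrite le_max => /orP[//|h]; by move: lt; rewrite ltNge h.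
Qed.
Lemma v_sum_lt (I : Type) (r : seq I) (P : pred I) (F : I -> K) (B : R) :
  0 < B -> (forall i, P i -> v (F i) < B) -> v (\sum_(i <- r | P i) F i) < B.
Proof.
move=> B0 h; apply: (big_ind (fun z => v z < B)) => //; first by rewrite v0.
by move=> a b ha hb; apply: le_lt_trans (vD _ _) _; rewrite gt_max ha hb.
Qed.
Lemma v_sum_le (I : Type) (r : seq I) (P : pred I) (F : I -> K) (B : R) :
  0 <= B -> (forall i, P i -> v (F i) <= B) -> v (\sum_(i <- r | P i) F i) <= B.
Proof.
move=> B0 h; apply: (big_ind (fun z => v z <= B)) => //; first by rewrite v0.
by move=> a b ha hb; apply: le_trans (vD _ _) _; rewrite ge_max ha hb.
Qed.
Lemma v_prod (I : Type) (r : seq I) (P : pred I) (F : I -> K) :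
  v (\prod_(i <- r | P i) F i) = \prod_(i <- r | P i) v (F i).
Proof. by apply: (big_morph v vM v1). Qed.
End Val.

Section F.
Context {K : fieldType} {N d : nat} (a : polyND K N d).
Definition W (i : 'I_N) : 'I_N.+1 := widen_ord (leqnSn N) i.
Definition Ssum (x : 'I_N.+1 -> K) (i : 'I_N) :=
  \sum_(I : midx N d | ind_star I) a i I * xpow x I.

Lemma W_lift i : W i = lift ord_max i.
Proof. by apply: val_inj; rewrite /= /bump leqNgt ltn_ord. Qed.

Lemma fcompW x i : fcomp a x (W i) = x (W i) ^+ d + Ssum x i.
Proof. by rewrite /fcomp W_lift liftK -W_lift. Qed.

Lemma fcompN x : fcomp a x ord_max = x ord_max ^+ d.
Proof. by rewrite /fcomp unlift_none. Qed.

Lemma notmax_W (j : 'I_N.+1) : j != ord_max -> exists j', j = W j'.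
Proof.
move=> h; have lt : (j < N)%N.
  by have := ltn_ord j; rewrite ltnS leq_eqVlt => /orP[/eqP e|//];
     move: h; rewrite -(inj_eq val_inj) /= e eqxx.
by exists (Ordinal lt); apply: val_inj.
Qed.

Lemma sumI (I : midx N d) : ind_star I ->
  (\sum_(j < N.+1 | j != ord_max) (I j : nat))%N = (d - I ord_max)%N.
Proof.
case/and3P => /eqP hs _ _.
move: hs; rewrite (bigD1 ord_max) //=.
set S := (\sum_(j < N.+1 | _) _)%N; set t := nat_of_ord _; move=> e.
by apply/eqP; rewrite -(eqn_add2l t) subnKC ?e // -e leq_addr.
Qed.

Lemma xpow_scale (k : K) (x : 'I_N.+1 -> K) (I : midx N d) : ind_star I ->
  xpow (fun j => k * x j) I = k ^+ d * xpow x I.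
Proof.
move=> hI; rewrite /xpow.
under eq_bigr do rewrite exprMn.
rewrite big_split /= prodrXr; congr (_ ^+ _ * _).
by case/and3P: hI => /eqP.
Qed.

Lemma fcomp_scale (k : K) x i : fcomp a (fun j => k * x j) i = k ^+ d * fcomp a x i.
Proof.
rewrite /fcomp; case: (unlift ord_max i) => [i'|]; last by rewrite exprMn.
rewrite exprMn mulrDr big_distrr /=; congr (_ + _).
apply: eq_bigr => I hI; rewrite xpow_scale //; by rewrite mulrCA.
Qed.
End F.
Arguments W {N}.
Arguments Ssum {K N d}.

Section FV.
Context {K : fieldType} {R : realType} {v : K -> R} {N d : nat} (a : polyND K N d).
Hypothesis Hv : nonarch_complete_abs v.

Lemma v_xpow (x : 'I_N.+1 -> K) (m : R) (I : midx N d) : 0 <= m ->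
  (forall j : 'I_N, v (x (W j)) <= m) -> ind_star I ->
  v (xpow x I) <= m ^+ (d - I ord_max) * v (x ord_max) ^+ I ord_max.
Proof.
move=> m0 hx hI; rewrite /xpow (v_prod Hv) (bigD1 ord_max) //= (vX Hv) mulrC.
rewrite ler_wpM2r ?exprn_ge0 ?(v_ge0 Hv) // -(sumI _ hI) -prodrXr.
apply: ler_prod => j hj; rewrite (vX Hv) exprn_ge0 ?(v_ge0 Hv) //=.
have [j' ->] := notmax_W _ hj.
by apply: lerXn2r; rewrite ?nnegrE ?(v_ge0 Hv).
Qed.
End FV.

Section Key.
Context {K : fieldType} {R : realType} {v : K -> R} {N d : nat} (a : polyND K N d).
Hypothesis Hv : nonarch_complete_abs v.
Variable M : R.
Hypothesis HM : 1 <= M.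
Hypothesis Hd : (0 < d)%N.
Hypothesis Ha : forall i (I : midx N d), ind_star I -> v (a i I) <= M ^+ I ord_max.

Lemma M0 : 0 <= M. Proof. exact: le_trans ler01 HM. Qed.

Lemma term_bound (x : 'I_N.+1 -> K) (m : R) i (I : midx N d) : 0 <= m ->
  (forall j : 'I_N, v (x (W j)) <= m) -> ind_star I ->
  v (a i I * xpow x I) <= m ^+ (d - I ord_max) * (M * v (x ord_max)) ^+ I ord_max.
Proof.
move=> m0 hx hI; rewrite (vM Hv) exprMn mulrCA.
apply: ler_pM; rewrite ?(v_ge0 Hv) ?Ha //; exact: v_xpow.
Qed.

Lemma S_small (x : 'I_N.+1 -> K) i : (forall j : 'I_N, v (x (W j)) <= 1) ->
  M * v (x ord_max) < 1 -> v (Ssum a x i) < 1.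
Proof.
move=> hx hM; apply: (v_sum_lt Hv) => // I hI.
apply: le_lt_trans (@term_bound x 1 i I ler01 hx hI) _ => //.
rewrite expr1n mul1r exprn_ilt1 ?mulr_ge0 ?M0 ?(v_ge0 Hv) //.
by case/and3P: hI => _; rewrite lt0n.
Qed.

Lemma S_big (x : 'I_N.+1 -> K) i : (forall j : 'I_N, v (x (W j)) <= 1) ->
  1 <= M * v (x ord_max) -> v (Ssum a x i) <= (M * v (x ord_max)) ^+ d.
Proof.
move=> hx hM; apply: (v_sum_le Hv) => [|I hI].
  by rewrite exprn_ge0 // mulr_ge0 ?M0 ?(v_ge0 Hv).
apply: le_trans (@term_bound x 1 i I ler01 hx hI) _ => //.
rewrite expr1n mul1r; apply: ler_weXn2l => //.
by case/and3P: hI => _ _ /ltnW.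
Qed.

Lemma key1 (x : 'I_N.+1 -> K) (c : K) (i0 : 'I_N) :
  (forall j, v (x (W j)) <= 1) -> v (x (W i0)) = 1 ->
  (forall i, v (c * fcomp a x (W i)) = 1) ->
  ((forall j, v (x (W j)) = 1) -> x ord_max != 0 /\ (v (x ord_max))^-1 <= M) ->
  (v (c * fcomp a x ord_max))^-1 <= M ^+ d.
Proof.
move=> hx hi0 hc HL.
have t0 : 0 <= v (x ord_max) by exact: (v_ge0 Hv).
rewrite fcompN (vM Hv) (vX Hv).
set t := v (x ord_max) in t0 HL *.
have c0 := (v_ge0 Hv c).
have [h|h] := boolP (1 <= M * t).
{ have hS := @S_big x i0 hx h.
  have hf : v (fcomp a x (W i0)) <= (M * t) ^+ d.
    rewrite fcompW; apply: le_trans (vD Hv _ _) _.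
    by rewrite ge_max hS andbT (vX Hv) hi0 expr1n exprn_ege1.
  have e := hc i0; rewrite (vM Hv) in e.
  have h1 : 1 <= v c * (M * t) ^+ d by rewrite -e ler_wpM2l.
  have tp : 0 < t.
    rewrite lt_neqAle t0 andbT; apply/eqP => t0'.
    by move: h; rewrite -t0' mulr0 ler10.
  have cp : 0 < v c.
    rewrite lt_neqAle c0 andbT; apply/eqP => c0'.
    by move: h1; rewrite -c0' mul0r ler10.
  have Mp : 0 < M ^+ d by rewrite exprn_gt0 // (lt_le_trans ltr01 HM).
  have pos1 : 0 < v c * t ^+ d by rewrite mulr_gt0 // exprn_gt0.
  rewrite invf_ple ?posrE //.
  by rewrite -[(M ^+ d)^-1]mulr1 ler_pdivrMl // mulrCA -exprMn. }
{ move: h; rewrite -ltNge => h.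
  have hS : forall i, v (Ssum a x i) < 1 by move=> i; apply: (@S_small x i hx).
  have hf0 : v (fcomp a x (W i0)) = 1.
    by rewrite fcompW v_strict // (vX Hv) hi0 expr1n.
  have vc1 : v c = 1 by have := hc i0; rewrite (vM Hv) hf0 mulr1.
  have all1 : forall j, v (x (W j)) = 1.
    move=> j; apply/eqP; rewrite eq_le hx /=; rewrite leNgt; apply/negP => hlt.
    have := hc j; rewrite (vM Hv) vc1 mul1r fcompW => e.
    have : v (x (W j) ^+ d + Ssum a x j) < 1.
      apply: le_lt_trans (vD Hv _ _) _; rewrite gt_max hS andbT (vX Hv).
      by rewrite expr_lt1 ?(v_ge0 Hv).
    by rewrite e ltxx.
  case: (HL all1) => nz hl.
  have tp : 0 < t by rewrite lt_neqAle t0 andbT; apply/eqP => /esym /(v_eq0 Hv) /eqP; rewrite (negbTE nz).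
  move: hl; rewrite -[t^-1]mulr1 ler_pdivrMl // mulrC => hl.
  by move: h; rewrite ltNge hl. }
Qed.
End Key.

Section Key2.
Context {K : fieldType} {R : realType} {v : K -> R} {N d : nat} (a : polyND K N d).
Hypothesis Hv : nonarch_complete_abs v.
Variable M : R.
Hypothesis HM : 1 <= M.
Hypothesis Hd : (0 < d)%N.
Hypothesis Ha : forall i (I : midx N d), ind_star I -> v (a i I) <= M ^+ I ord_max.

Lemma key2 (Z : ('I_N.+1 -> K) -> Prop) (x : 'I_N.+1 -> K) (c : K) :
  (forall k x, Z x -> Z (fun j => k * x j)) ->
  (forall x, Z x -> (forall j, v (x (W j)) = 1) ->
      x ord_max != 0 /\ (v (x ord_max))^-1 <= M) ->
  (0 < N)%N -> Z x ->
  (forall i, v (c * fcomp a x (W i)) = 1) ->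
  (v (c * fcomp a x ord_max))^-1 <= M ^+ d.
Proof.
move=> Zs HL hN Zx hc.
pose i00 : 'I_N := Ordinal hN.
have [i0 _ hmax] := @arg_maxP _ _ _ i00 xpredT (fun i => v (x (W i))) isT.
set m := v (x (W i0)) in hmax.
have m0 : 0 <= m := v_ge0 Hv _.
have [mz|mp] := eqVneq m 0.
  exfalso.
  have vz : forall y, v y <= 0 -> v y = 0.
    by move=> y h; apply/eqP; rewrite eq_le h (v_ge0 Hv).
  have hx0 : forall j, v (x (W j)) <= 0 by move=> j; rewrite -mz; exact: hmax.
  have hf : v (fcomp a x (W i00)) <= 0.
    rewrite fcompW; apply: le_trans (vD Hv _ _) _; rewrite ge_max; apply/andP; split.
      by rewrite (vX Hv) (vz _ (hx0 i00)) expr0n; move: Hd; rewrite lt0n => /negbTE ->.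
    apply: (v_sum_le Hv) => // I hI.
    apply: le_trans (@term_bound _ _ _ _ _ a Hv M Ha x 0 i00 I (lexx 0) hx0 hI) _.
    case/and3P: hI => _ _ hlt.
    by rewrite expr0n subn_eq0 leqNgt hlt mul0r.
  have := hc i00; rewrite (vM Hv) (vz _ hf) mulr0 => e.
  by move: (@ltr01 R); rewrite e ltxx.
have xi0 : x (W i0) != 0 by apply/eqP => /(congr1 v); rewrite v0 //; apply/eqP.
pose k := (x (W i0))^-1.
have k0 : k != 0 by rewrite invr_eq0.
pose x' := fun j => k * x j.
pose c' := c / k ^+ d.
have e : forall i, c' * fcomp a x' i = c * fcomp a x i.
  by move=> i; rewrite /x' fcomp_scale /c' mulrA divfK // expf_neq0.
rewrite -e; apply: (@key1 _ _ _ _ _ a Hv M HM Hd Ha x' c' i0).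
- move=> j; rewrite /x' (vM Hv) /k (vV Hv) -/m.
  have mp' : 0 < m by rewrite lt_neqAle eq_sym mp m0.
  by rewrite ler_pdivrMl // mulr1; exact: hmax.
- by rewrite /x' (vM Hv) /k (vV Hv) -/m mulVf.
- by move=> i; rewrite e.
- by move=> h; apply: HL => //; apply: Zs.
Qed.
End Key2.

Import (canonicals) mpoly.
Lemma meval_scale (K : fieldType) n (F : mpoly.mpoly n K) deg (k : K) (x : 'I_n -> K) :
  all (fun m => mpoly.mdeg m == deg) (mpoly.msupp F) ->
  mpoly.meval (fun i => k * x i) F = k ^+ deg * mpoly.meval x F.
Proof.
move=> H; rewrite !mpoly.mevalE big_distrr; apply: eq_big_seq => m hm /=.
have /eqP hd := allP H m hm.
under eq_bigr do rewrite exprMn.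
by rewrite big_split /= prodrXr -mpoly.mdegE hd mulrCA.
Qed.

Lemma lnmax (R : realType) (x y : R) : 0 < x -> 0 < y ->
  ln (Num.max x y) = Num.max (ln x) (ln y).
Proof.
move=> hx hy; have [h|h] := leP x y.
  have h' : ln x <= ln y by rewrite ler_ln.
  by rewrite (max_r h').
have h' : ln y <= ln x by rewrite ler_ln ?ltW.
by rewrite (max_l h').
Qed.

Lemma A1_ex {K : fieldType} {R : realType} {v : K -> R} {N d : nat} {a : polyND K N d} :
  nonarch_complete_abs v ->
  exists A1, 1 <= A1 /\ Bv v a = ln A1 /\
    forall i (I : midx N d), ind_star I -> v (a i I) <= A1 ^+ I ord_max.
Proof.
move=> Hv.
exists (Num.max 1 (\big[Num.max/0]_(i < N) \big[Num.max/0]_(I : midx N d | ind_star I)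
          (v (a i I) `^ ((I ord_max)%:R)^-1))).
split; first by rewrite le_max lexx.
split; first by [].
move=> i I hI.
have n0 : (0 < I ord_max)%N by case/and3P: hI.
set A := \big[Num.max/0]_(i < N) _.
have hle : v (a i I) `^ ((I ord_max)%:R)^-1 <= Num.max 1 A.
  rewrite le_max; apply/orP; right.
  apply: le_trans (le_bigmax _ _ i).
  exact: (le_bigmax_cond _ (P := fun I => ind_star I) (fun I => v (a i I) `^ ((I ord_max)%:R)^-1) hI).
have e : v (a i I) = (v (a i I) `^ ((I ord_max)%:R)^-1) `^ (I ord_max)%:R.
  rewrite -powRrM mulVf ?powRr1 ?(v_ge0 Hv) //.
  by rewrite pnatr_eq0 -lt0n.
rewrite e -powR_mulrn; last by rewrite le_max ler01.
by apply: ge0_ler_powR; rewrite ?nnegrE ?powR_ge0 ?ler0n // le_max ler01.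
Qed.

Lemma ecase (R : realType) (x : \bar R) :
  (exists r, x = r%:E) \/ (x = +oo%E \/ x = -oo%E).
Proof. by case: x => [r| |]; [left; exists r|right; left|right; right]. Qed.

Theorem lemma3p2 (R : realType) (K : closedFieldType) (v : K -> R)
    (N d : nat) (a : polyND K N d) (F : mpoly.mpoly N.+1 K) :
  (1 <= N)%N -> (2 <= d)%N ->
  nonarch_complete_abs v ->
  ([pchar K] =i pred0 \/ (forall p, p \in [pchar K] -> (d < p)%N)) ->
  div_star F ->
  (lambda_push v a F <= (d%:R)%:E * maxe (Bv v a)%:E (lambda_div v F))%E /\
  (((Bv v a)%:E < lambda_div v F)%E ->
     lambda_push v a F = ((d%:R)%:E * lambda_div v F)%E).
Proof.
move=> hN hd Hv _ [[deg Hdeg] [e He]].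
have Hd : (0 < d)%N by apply: leq_trans hd.
have [A1 [A1ge1 [BvE Ha1]]] := A1_ex (a := a) Hv.
have A1p : 0 < A1 by apply: lt_le_trans A1ge1.
rewrite BvE /lambda_push /lambda_div /lambda_set.
set sP := ereal_sup _.
set sD := ereal_sup _.
have Zs : forall (k : K) (x : 'I_N.+1 -> K), zeroes F x -> zeroes F (fun j => k * x j).
  by move=> k x; rewrite /zeroes /= => h; rewrite (@meval_scale _ _ F deg k x Hdeg) h mulr0.
have Znz : forall x : 'I_N.+1 -> K, zeroes F x -> (forall j, v (x (W j)) = 1) ->
    x ord_max != 0.
  move=> x Zx h1; apply/eqP => x0.
  have := He x x0; rewrite Zx => /esym/eqP; rewrite prodf_seq_eq0 => /hasP[i _ /=].
  rewrite expf_eq0 => /andP[_ /eqP xi0].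
  by have := h1 i; rewrite /W xi0 v0 //; apply/eqP; rewrite eq_sym oner_eq0.
have hsD : forall b : 'I_N.+1 -> K, zeroes F b -> (forall i, v (b (W i)) = 1) ->
    (((v (b ord_max))^-1)%:E <= sD)%E.
  by move=> b h1 h2; apply: ereal_sup_ubound; exists b.
have P1 : forall L : R, 1 <= L ->
    (forall b : 'I_N.+1 -> K, zeroes F b -> (forall i, v (b (W i)) = 1) ->
       (v (b ord_max))^-1 <= L) ->
    (elogp sP <= (d%:R * ln (Num.max A1 L))%:E)%E.
  move=> L L1 HL.
  set M := Num.max A1 L.
  have M1 : 1 <= M by rewrite le_max A1ge1.
  have Mp : 0 < M by apply: lt_le_trans M1.
  have HaM : forall i (I : midx N d), ind_star I -> v (a i I) <= M ^+ I ord_max.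
    move=> i I hI; apply: le_trans (Ha1 i I hI) _.
    by apply: lerXn2r; rewrite ?nnegrE ?le_max ?lexx ?(ltW A1p) ?(ltW Mp).
  have bnd : (sP <= (M ^+ d)%:E)%E.
    apply/ereal_supP => _ [y [[c [x [Zx ->]]] hy] <-].
    rewrite lee_fin.
    apply: (@key2 _ _ _ _ _ a Hv M M1 Hd HaM (zeroes F) x c) => //.
    move=> z Zz hz; split; first exact: Znz.
    by apply: le_trans (HL z Zz hz) _; rewrite le_max lexx orbT.
  have lnM : ln (M ^+ d) = d%:R * ln M by rewrite lnXn // mulr_natl.
  case: sP bnd => [r| |] /=.
  - rewrite !lee_fin => hr; rewrite /logp -lnM ler_ln ?posrE ?exprn_gt0 //.
      by rewrite ge_max hr exprn_ege1.
    by rewrite lt_max ltr01.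
  - by rewrite leye_eq.
  - move=> _; rewrite lee_fin mulr_ge0 ?ler0n // ln_ge0 //.
have H1 : (elogp sP <= (d%:R)%:E * maxe (ln A1)%:E (elogp sD))%E.
  have [[r hsDe]|[hsDe|hsDe]] := ecase _ sD; rewrite hsDe /=.
  - have := P1 (Num.max 1 r); rewrite le_max lexx => /(_ isT) h.
    rewrite /logp -EFin_max -EFinM -lnmax //; last by rewrite lt_max ltr01.
    apply: h => b Zb hb; have := hsD b Zb hb; rewrite hsDe lee_fin => h'.
    by apply: le_trans h' _; rewrite le_max lexx orbT.
  - by rewrite maxey gt0_muley ?leey // lte_fin ltr0n.
  - have := P1 1 (lexx 1) => h.
    have -> : (0 : \bar R) = (ln 1)%:E by rewrite ln1.
    rewrite -EFin_max -EFinM -lnmax ?ltr01 //; apply: h => b Zb hb.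
    by have := hsD b Zb hb; rewrite hsDe leeNy_eq.
split => // hlt.
have lnA1 : 0 <= ln A1 by apply: ln_ge0.
have sDA : ~ (sD <= A1%:E)%E.
  move=> h; move: hlt; have [[r hsDe]|[hsDe|hsDe]] := ecase _ sD; rewrite hsDe in h *.
  - move: h; rewrite lee_fin /= lte_fin /logp => h.
    rewrite ltNge ler_ln ?posrE //; last by rewrite lt_max ltr01.
    by rewrite ge_max A1ge1 h.
  - by rewrite leye_eq in h.
  - by rewrite /= lte_fin ltNge lnA1.
apply/le_anti/andP; split.
  by move: H1; rewrite max_r // ltW.
have P2 : forall b : 'I_N.+1 -> K, zeroes F b -> (forall i, v (b (W i)) = 1) ->
    A1 < (v (b ord_max))^-1 -> ((((v (b ord_max))^-1) ^+ d)%:E <= sP)%E.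
  move=> b Zb hb hA.
  have tp : 0 < v (b ord_max).
    rewrite lt_neqAle (v_ge0 Hv) andbT; apply/eqP => t0.
    by move: hA; rewrite -t0 invr0 ltNge (ltW A1p).
  apply: ereal_sup_ubound; exists (fun i => 1 * fcomp a b i).
    split; first by exists 1, b.
    move=> i; rewrite mul1r fcompW v_strict // ?(vX Hv) ?hb ?expr1n //.
    apply: (@S_small _ _ _ _ _ a Hv A1 A1ge1 Ha1 b i) => [j|]; first by rewrite hb.
    by rewrite -ltr_pdivlMr // mul1r.
  by rewrite mul1r fcompN (vX Hv) exprVn.
have [[p hsP]|[hsP|hsP]] := ecase _ sP; rewrite hsP /=; [|by rewrite leey|]; last first.
- exfalso; apply: sDA; apply/ereal_supP => _ [b [Zb hb] <-].
  rewrite lee_fin leNgt; apply/negP => hA.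
  by have := P2 b Zb hb hA; rewrite hsP leeNy_eq.
pose q := Num.max 1 p.
have q1 : 1 <= q by rewrite le_max lexx.
have qp : 0 < q by apply: lt_le_trans q1.
have dp : (0 : R) < d%:R by rewrite ltr0n.
have sDQ : (sD <= (Num.max A1 (q `^ (d%:R)^-1))%:E)%E.
  apply/ereal_supP => _ [b [Zb hb] <-]; rewrite lee_fin le_max.
  have [hA|hA] := leP ((v (b ord_max))^-1) A1; first by [].
  apply/orP; right.
  have hz : (v (b ord_max))^-1 ^+ d <= q.
    by have := P2 b Zb hb hA; rewrite hsP lee_fin => h; apply: le_trans h _; rewrite le_max lexx orbT.
  have z0 : 0 <= (v (b ord_max))^-1 by rewrite invr_ge0 (v_ge0 Hv).
  have e1 : (v (b ord_max))^-1 = ((v (b ord_max))^-1 ^+ d) `^ ((d%:R)^-1).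
    by rewrite -powR_mulrn // -powRrM mulfV ?lt0r_neq0 // powRr1.
  rewrite [X in X <= _]e1.
  by apply: ge0_ler_powR; rewrite ?nnegrE ?invr_ge0 ?ler0n ?exprn_ge0 ?(ltW qp).
move: hlt sDQ sDA; have [[r hsDe]|[hsDe|hsDe]] := ecase _ sD; rewrite hsDe /=; [| by move=> _; rewrite leye_eq |]; last first.
  by rewrite lte_fin ltNge lnA1.

rewrite !lee_fin lte_fin /logp => hlt rQ rA.
have rA1 : A1 < r by rewrite ltNge; apply/negP => h; exact: rA.
have r1 : 1 < r by apply: le_lt_trans rA1.
have rp : 0 < r by apply: lt_trans r1; rewrite ltr01.
have -> : Num.max 1 r = r by apply/max_idPr; apply: ltW.
have rq : r <= q `^ (d%:R)^-1.
  by move: rQ; rewrite le_max leNgt rA1.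
have : ln r <= (d%:R)^-1 * ln q.
  rewrite -ln_powR ler_ln ?posrE // powR_gt0 //.

move=> h.
have e2 : ln q = d%:R * ((d%:R)^-1 * ln q) by rewrite mulrA mulfV ?lt0r_neq0 // mul1r.
by rewrite [X in _ <= X]e2 ler_pM2l.
Qed.
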